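(* Let $G$ be a graph with $n$ nodes, GSO $\mathbf{\Delta}\in\mathbb{R}^{n\times n}$ and GWM $\boldsymbol{A}=n\mathbf{\Delta}$. Let $h:\mathbb{R}\to\mathbb{R}$ be continuous with $h(0)=0$. Then $h(T_{W_{\boldsymbol{A}}})=T_{W_{nh(\mathbf{\Delta})}}$ as operators on $L^2[0,1]$.
   Context: A graph with graph shift operator (GSO) is a triple $G=(V,E,\mathbf{\Delta})$ with $V=\{1,\dots,n\}$ and $\mathbf{\Delta}\in\mathbb{R}^{n\times n}$ symmetric; its graph weight matrix (GWM) is $\boldsymbol{A}=n\mathbf{\Delta}$. For a continuous $h:\mathbb{R}\to\mathbb{R}$ and a symmetric matrix or bounded self-adjoint operator $T$, $h(T)$ is defined by continuous functional calculus (for $\mathbf{\Delta}$ with orthonormal eigenpairs $(\lambda_j,\phi_j)$: $h(\mathbf{\Delta})\mathbf{x}=\sum_j h(\lambda_j)\langle\mathbf{x},\phi_j\rangle\phi_j$; for a compact self-adjoint operator with an orthonormal eigenbasis $(\phi_j)$, including kernel vectors, $h(T)\psi=\sum_j h(\lambda_j)\langle\psi,\phi_j\rangle\phi_j$). For $n\in\mathbb{N}$ let $P_k=[(k-1)/n,k/n)$, $k=1,\dots,n$. For $\boldsymbol{B}\in\mathbb{R}^{n\times n}$ the induced graphon is $W_{\boldsymbol{B}}(u,v)=\sum_{i,j}\boldsymbol{B}_{ij}\chi_{P_i}(u)\chi_{P_j}(v)$; thus $W_{nh(\mathbf{\Delta})}$ is the graphon induced by the matrix $nh(\mathbf{\Delta})$.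 For a bounded symmetric measurable $W:[0,1]^2\to\mathbb{R}$, $T_W\psi(v)=\int_0^1W(v,u)\psi(u)\,du$ on $L^2[0,1]$. *)

(* Defs.v *)
From HB Require Import structures.
From mathcomp Require Import all_boot all_order all_algebra.
From mathcomp Require Import all_classical all_reals all_analysis.
Set Implicit Arguments. Unset Strict Implicit. Unset Printing Implicit Defensive.
Import Order.TTheory GRing.Theory Num.Theory.
Import numFieldNormedType.Exports.
Local Open Scope classical_set_scope.
Local Open Scope ring_scope.

Section Defs.
Variable R : realType.
Local Notation mu := (@lebesgue_measure R).
Local Notation I01 := (`[(0:R), 1]%classic).

(* psi is in L^2[0,1] (functions R -> R, only values on [0,1] matter) *)
Definition L2 (psi : R -> R) : Prop :=
  measurable_fun I01 psi /\
  (\int[mu]_(x in I01) ((psi x) ^+ 2)%:E < +oo)%E.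

Definition ip (f g : R -> R) : R := Rintegral mu I01 (fun x => f x * g x).

Definition l2dist2 (f g : R -> R) : R :=
  Rintegral mu I01 (fun x => (f x - g x) ^+ 2).

Definition ae_eq01 (f g : R -> R) : Prop :=
  {ae mu, forall x, I01 x -> f x = g x}.

(* characteristic function of P_k = [(k-1)/n, k/n), here 0-based: [i/n,(i+1)/n) *)
Definition chiP (n : nat) (i : 'I_n) (u : R) : R :=
  ((i%:R / n%:R <= u) && (u < i.+1%:R / n%:R))%:R.

Definition graphon_of (n : nat) (B : 'M[R]_n) (u v : R) : R :=
  \sum_(i < n) \sum_(j < n) B i j * chiP i u * chiP j v.

Definition T_op (W : R -> R -> R) (psi : R -> R) : R -> R :=
  fun v => Rintegral mu I01 (fun u => W v u * psi u).

Definition ON_eigenbasis (W : R -> R -> R) (phi : nat -> R -> R) (lam : nat -> R)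
  : Prop :=
  (forall j, L2 (phi j)) /\
  (forall i j, ip (phi i) (phi j) = (i == j)%:R) /\
  (forall psi, L2 psi -> (forall j, ip psi (phi j) = 0) -> ae_eq01 psi (fun _ => 0)) /\
  (forall j, ae_eq01 (T_op W (phi j)) (fun v => lam j * phi j v)).

(* partial sums of h(T) psi = sum_j h(lam_j) <psi,phi_j> phi_j *)
Definition fc_partial (h : R -> R) (phi : nat -> R -> R) (lam : nat -> R)
  (psi : R -> R) (N : nat) : R -> R :=
  fun x => \sum_(j < N) h (lam j) * ip psi (phi j) * phi j x.

Definition mx_ON_eigenbasis (n : nat) (D U : 'M[R]_n) (lam : 'I_n -> R) : Prop :=
  U^T *m U = 1%:M /\ D *m U = U *m diag_mx (\row_j lam j).

(* h(Delta) x = sum_j h(lam_j) <x,phi_j> phi_j, i.e. sum_j h(lam_j) phi_j phi_j^T *)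
Definition mx_fun (n : nat) (h : R -> R) (U : 'M[R]_n) (lam : 'I_n -> R)
  : 'M[R]_n :=
  \sum_(j < n) h (lam j) *: (col j U *m (col j U)^T).

End Defs.

(* Main.v *)
Require Import Defs.
From HB Require Import structures.
From mathcomp Require Import all_boot all_order all_algebra.
From mathcomp Require Import all_classical all_reals all_analysis.
From mathcomp Require Import measurable_realfun.
From mathcomp Require Import lra ring.
Set Implicit Arguments. Unset Strict Implicit. Unset Printing Implicit Defensive.
Import Order.TTheory GRing.Theory Num.Theory.
Import numFieldNormedType.Exports.
Local Open Scope classical_set_scope.
Local Open Scope ring_scope.
Section S1.
Variable R : realType.
Local Notation mu := (@lebesgue_measure R).
Local Notation I01 := (`[(0:R), 1]%classic).
Variable n : nat.

Lemma mI01 : measurable (I01 : set (measurableTypeR R)).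
Proof. exact: measurable_itv. Qed.

Lemma chiP_indic (i : 'I_n) (u : R) :
  chiP i u = \1_(`[i%:R / n%:R, i.+1%:R / n%:R[%classic) u.
Proof.
rewrite indicE /chiP; congr ((nat_of_bool _)%:R).
by apply/idP/idP => h; rewrite ?inE /= ?in_itv in h *.
Qed.

Lemma mchiP (D : set R) (i : 'I_n) : measurable_fun D (chiP i).
Proof.
rewrite (_ : chiP i = \1_(`[i%:R / n%:R, i.+1%:R / n%:R[%classic)); last first.
  by apply/funext => u; rewrite chiP_indic.
apply: measurable_indic; exact: measurable_itv.
Qed.

Lemma chiP_ge0 (i : 'I_n) (u : R) : 0 <= chiP i u.
Proof. by rewrite /chiP ler0n. Qed.
Lemma chiP_le1 (i : 'I_n) (u : R) : chiP i u <= 1.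
Proof. by rewrite /chiP (_ : 1 = 1%:R) // ler_nat leq_b1. Qed.

Lemma chiP_mul (i k : 'I_n) (u : R) : chiP i u * chiP k u = (i == k)%:R * chiP i u.
Proof.
have n0 : (0 < n%:R :> R) by rewrite ltr0n (leq_ltn_trans _ (ltn_ord i)).
have [->|ik] := eqVneq i k; first by rewrite /chiP -!natrM; case: (_ <= _ < _).
rewrite mul0r /chiP.
wlog lt : i k ik / (i < k)%N.
  move=> W; case: (ltngtP i k) => [ik'|ki|e]; first exact: W.
    by rewrite mulrC; apply: W => //; rewrite eq_sym.
  by move/val_inj: e => e; rewrite e eqxx in ik.
case/boolP: ((i%:R / n%:R <= u) && (u < i.+1%:R / n%:R)) => /= h; last by rewrite mul0r.
case/boolP: ((k%:R / n%:R <= u) && (u < k.+1%:R / n%:R)) => /= h'; last by rewrite mulr0.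
exfalso; move/andP: h => [_ h]; move/andP: h' => [h' _].
have : i.+1%:R / n%:R <= k%:R / (n%:R : R).
  by rewrite ler_pM2r ?invr_gt0 // ler_nat.
by move=> le; have := lt_le_trans (le_lt_trans h' h) le; rewrite ltxx.
Qed.
End S1.
Section S2.
Variable R : realType.
Local Notation mu := (@lebesgue_measure R).
Local Notation I01 := (`[(0:R), 1]%classic).
Variable n : nat.

Lemma npos (i : 'I_n) : (0 < n%:R :> R).
Proof. by rewrite ltr0n (leq_ltn_trans _ (ltn_ord i)). Qed.

Lemma int_chiP (i : 'I_n) : Rintegral mu I01 (chiP i) = n%:R^-1.
Proof.
have n0 := npos i.
rewrite /Rintegral.
under eq_integral do rewrite chiP_indic.
rewrite integral_indic; [|exact: mI01|exact: measurable_itv].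
rewrite setIidl; last first.
  move=> x; rewrite /= !in_itv /= => /andP[h1 h2]; apply/andP; split.
    by apply: le_trans h1; rewrite divr_ge0.
  apply: ltW; apply: (lt_le_trans h2).
  by rewrite ler_pdivrMr // mul1r ler_nat.
have E : mu `[i%:R / n%:R, i.+1%:R / n%:R[%classic = (i.+1%:R / n%:R - i%:R / n%:R)%:E.
  rewrite lebesgue_measure_itv /= lte_fin ltr_pM2r ?invr_gt0 // ltr_nat ltnSn /=.
  by rewrite -EFinB.
rewrite (_ : fine _ = fine ((i.+1%:R / n%:R - i%:R / n%:R)%:E)); last by congr fine; exact: E.
by rewrite /= -mulrBl -natrB // subSnn mul1r.
Qed.
End S2.
Section S3.
Variable R : realType.
Local Notation mu := (@lebesgue_measure R).
Local Notation I01 := (`[(0:R), 1]%classic).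
Local Notation int f := (mu.-integrable I01 (EFin \o f)).
Local Notation mI := (@mI01 R).

Lemma int_cst (c : R) : int (fun _ => c).
Proof.
have h := @integrable_indic_itv R 0 1 true false.
have h2 : mu.-integrable I01 (EFin \o \1_I01).
  by apply: integrableS h => //; exact: mI01.
have h3 := integrableZl mI c h2.
apply: eq_integrable h3 => //x; rewrite inE => Ix /=.
by rewrite indicE mem_set // mule1.
Qed.

Lemma int_bound (f : R -> R) (B : R) : measurable_fun I01 f ->
  (forall x, I01 x -> `|f x| <= B) -> int f.
Proof.
move=> mf fB; apply: (le_integrable mI _ _ (int_cst B)).
  exact/measurable_EFinP.
move=> x Ix /=; rewrite lee_fin; apply: (le_trans (fB x Ix)).
exact: ler_norm.
Qed.

Lemma int_fin (f : R -> R) : int f -> (forall x, 0 <= f x) ->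
  (\int[mu]_(x in I01) (f x)%:E < +oo)%E.
Proof.
move=> /integrableP[mf h] f0; apply: le_lt_trans h.
apply: ge0_le_integral => //.
- by move=> x _; rewrite lee_fin.
- by apply: measurableT_comp.
- by move=> x _; rewrite /= lee_fin ger0_norm.
Qed.
End S3.
Section S4.
Variable R : realType.
Local Notation mu := (@lebesgue_measure R).
Local Notation I01 := (`[(0:R), 1]%classic).
Local Notation int f := (mu.-integrable I01 (EFin \o f)).
Local Notation mI := (@mI01 R).

Lemma int_meas (f : R -> R) : int f -> measurable_fun I01 f.
Proof. by move=> /integrableP[mf _]; apply/measurable_EFinP. Qed.

Lemma int_Z (c : R) (f : R -> R) : int f -> int (fun x => c * f x).
Proof.
move=> h; have := integrableZl mI c h.
by apply: eq_integrable => // x _ /=; rewrite EFinM.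
Qed.

Lemma int_D (f g : R -> R) : int f -> int g -> int (fun x => f x + g x).
Proof.
move=> hf hg; have := integrableD mI hf hg.
by apply: eq_integrable => // x _ /=; rewrite EFinD.
Qed.

Lemma int_sum (I : Type) (s : seq I) (F : I -> R -> R) :
  (forall i, int (F i)) -> int (fun x => \sum_(i <- s) F i x).
Proof.
move=> h; elim: s => [|a s ih].
  by apply: (eq_integrable mI _ _ _ (int_cst 0)) => x _; rewrite /= big_nil.
by apply: (eq_integrable mI _ _ _ (int_D (h a) ih)) => x _; rewrite /= big_cons.
Qed.

Lemma Rint_sum (I : Type) (s : seq I) (F : I -> R -> R) :
  (forall i, int (F i)) ->
  Rintegral mu I01 (fun x => \sum_(i <- s) F i x) =
  \sum_(i <- s) Rintegral mu I01 (F i).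
Proof.
move=> h; elim: s => [|a s ih].
  under eq_Rintegral do rewrite big_nil.
  by rewrite big_nil Rintegral_cst ?mul0r.
under eq_Rintegral do rewrite big_cons.
rewrite RintegralD //; first by rewrite ih big_cons.
exact: int_sum.
Qed.

Lemma Rint_Z (c : R) (f : R -> R) : int f ->
  Rintegral mu I01 (fun x => c * f x) = c * Rintegral mu I01 f.
Proof. by move=> h; rewrite RintegralZl. Qed.

Lemma L2_int (g : R -> R) : L2 g -> int g.
Proof.
move=> [mg fg].
have i2 : int (fun x => g x ^+ 2).
  apply/integrableP; split; first by apply/measurable_EFinP; exact: measurable_funX.
  apply: le_lt_trans fg; apply: ge0_le_integral => //;
  try (by move=> x _; rewrite lee_fin sqr_ge0);
  try (by apply: measurableT_comp => //; apply/measurable_EFinP; exact: measurable_funX);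
  try (by apply/measurable_EFinP; exact: measurable_funX).
  by move=> x _; rewrite /comp abse_EFin lee_fin ger0_norm // sqr_ge0.
have i3 := int_D (int_cst 1) i2.
apply: (le_integrable mI _ _ i3); first exact/measurable_EFinP.
move=> x _ /=; rewrite lee_fin (@ger0_norm _ (1 + g x ^+ 2)); last by rewrite addr_ge0 // sqr_ge0.
rewrite -real_normK ?num_real //.
have y0 : 0 <= `|g x| by exact: normr_ge0.
nra.
Qed.
End S4.
Section S5.
Variable R : realType.
Local Notation mu := (@lebesgue_measure R).
Local Notation I01 := (`[(0:R), 1]%classic).
Local Notation int f := (mu.-integrable I01 (EFin \o f)).
Local Notation mI := (@mI01 R).
Variable n : nat.

Definition stepf (a : 'cV[R]_n) (x : R) : R := \sum_(i < n) a i 0 * chiP i x.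
Definition coef (g : R -> R) : 'cV[R]_n :=
  \col_i Rintegral mu I01 (fun u => chiP i u * g u).
Definition dot (a b : 'cV[R]_n) : R := (a^T *m b) 0 0.

Lemma dotE a b : dot a b = \sum_i a i 0 * b i 0.
Proof. by rewrite /dot !mxE; apply: eq_bigr => i _; rewrite mxE. Qed.

Lemma mstep a : measurable_fun I01 (stepf a).
Proof.
apply: measurable_sum => i; apply: measurable_funM; first exact: measurable_cst.
exact: mchiP.
Qed.

Lemma int_chi (i : 'I_n) : int (chiP i).
Proof.
apply: (@int_bound _ _ 1); first exact: mchiP.
by move=> x _; rewrite ger0_norm ?chiP_ge0 ?chiP_le1.
Qed.

Lemma int_step a : int (stepf a).
Proof. by apply: int_sum => i; apply: int_Z; exact: int_chi. Qed.

Lemma int_mulchi (g : R -> R) (i : 'I_n) : int g -> int (fun u => chiP i u * g u).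
Proof.
move=> ig; apply: (le_integrable mI _ _ ig).
  apply/measurable_EFinP; apply: measurable_funM; first exact: mchiP.
  exact: int_meas.
move=> x _ /=; rewrite lee_fin normrM ger0_norm ?chiP_ge0 //.
by rewrite ler_piMl ?chiP_le1.
Qed.

Lemma chiP_step a (i : 'I_n) u : chiP i u * stepf a u = a i 0 * chiP i u.
Proof.
rewrite /stepf mulr_sumr (bigD1 i) //= big1 ?addr0.
  by rewrite mulrCA chiP_mul eqxx mul1r.
move=> k ki; rewrite mulrCA chiP_mul eq_sym (negPf ki) mul0r mulr0 //.
Qed.

Lemma coef_step a : coef (stepf a) = n%:R^-1 *: a.
Proof.
apply/matrixP => i j; rewrite !mxE (ord1 j).
under eq_Rintegral do rewrite chiP_step.
by rewrite Rint_Z ?int_chi // int_chiP mulrC.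
Qed.

Lemma ip_step g a : int g -> ip g (stepf a) = dot a (coef g).
Proof.
move=> ig; rewrite /ip dotE.
have E u : g u * stepf a u = \sum_i a i 0 * (chiP i u * g u).
  by rewrite /stepf mulr_sumr; apply: eq_bigr => i _; ring.
under eq_Rintegral do rewrite E.
rewrite Rint_sum; last by move=> i; apply: int_Z; exact: int_mulchi.
apply: eq_bigr => i _; rewrite mxE Rint_Z //; exact: int_mulchi.
Qed.

Lemma T_step (M : 'M[R]_n) g : int g ->
  T_op (graphon_of M) g = stepf (M *m coef g).
Proof.
move=> ig; apply/funext => v; rewrite /T_op /stepf.
have E u : graphon_of M v u * g u =
    \sum_i \sum_j (M i j * chiP i v) * (chiP j u * g u).
  rewrite /graphon_of mulr_suml; apply: eq_bigr => i _.
  rewrite mulr_suml; apply: eq_bigr => j _; ring.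
under eq_Rintegral do rewrite E.
rewrite Rint_sum; last first.
  by move=> i; apply: int_sum => j; apply: int_Z; exact: int_mulchi.
apply: eq_bigr => i _; rewrite Rint_sum; last first.
  by move=> j; apply: int_Z; exact: int_mulchi.
rewrite !mxE mulr_suml; apply: eq_bigr => j _.
rewrite Rint_Z; last exact: int_mulchi.
by rewrite mxE; ring.
Qed.

Lemma stepfZ k a x : stepf (k *: a) x = k * stepf a x.
Proof.
rewrite /stepf mulr_sumr; apply: eq_bigr => i _; rewrite mxE; ring.
Qed.

Lemma stepfB a b x : stepf (a - b) x = stepf a x - stepf b x.
Proof.
rewrite /stepf -sumrB; apply: eq_bigr => i _; rewrite !mxE; ring.
Qed.

Lemma stepf_bound a x : `|stepf a x| <= \sum_i `|a i 0|.
Proof.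
rewrite /stepf; apply: (le_trans (ler_norm_sum _ _ _)); apply: ler_sum => i _.
rewrite normrM (ger0_norm (chiP_ge0 _ _)); apply: ler_piMr => //.
exact: chiP_le1.
Qed.

Lemma L2_step a : L2 (stepf a).
Proof.
split; first exact: mstep.
apply: int_fin; last by move=> x; exact: sqr_ge0.
apply: (@int_bound _ _ ((\sum_i `|a i 0|) ^+ 2)).
  by apply: measurable_funX; exact: mstep.
move=> x _; rewrite normrX; apply: lerXn2r => //; rewrite ?nnegrE //.
- exact: sumr_ge0.
- exact: stepf_bound.
Qed.

Lemma Rint_ae (F G : R -> R) : measurable_fun I01 F -> measurable_fun I01 G ->
  ae_eq01 F G -> Rintegral mu I01 F = Rintegral mu I01 G.
Proof.
move=> mF mG h; rewrite /Rintegral; congr fine.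
apply: ae_eq_integral => //; try exact/measurable_EFinP.
have hF := @ae_filter_ringOfSetsType _ _ _ mu.
by apply: filterS h => x h' Ix; rewrite /= h'.
Qed.

End S5.
Section LA.
Variable R : realType.
Variable n : nat.
Implicit Types a b c : 'cV[R]_n.

Lemma dot_sym a b : dot a b = dot b a.
Proof. by rewrite !dotE; apply: eq_bigr => i _; rewrite mulrC. Qed.

Lemma dotZl k a b : dot (k *: a) b = k * dot a b.
Proof. by rewrite !dotE mulr_sumr; apply: eq_bigr => i _; rewrite mxE mulrA. Qed.

Lemma dotZr k a b : dot a (k *: b) = k * dot a b.
Proof. by rewrite dot_sym dotZl dot_sym. Qed.

Lemma dotBl a b c : dot (a - b) c = dot a c - dot b c.
Proof. by rewrite !dotE -sumrB; apply: eq_bigr => i _; rewrite !mxE mulrBl. Qed.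

Lemma dotBr a b c : dot c (a - b) = dot c a - dot c b.
Proof. by rewrite dot_sym dotBl !(dot_sym c). Qed.

Lemma dot0l b : dot 0 b = 0.
Proof. by rewrite dotE big1 // => i _; rewrite mxE mul0r. Qed.

Lemma dot0r b : dot b 0 = 0.
Proof. by rewrite dot_sym dot0l. Qed.

Lemma dot_suml (I : Type) (r : seq I) (F : I -> 'cV[R]_n) c :
  dot (\sum_(i <- r) F i) c = \sum_(i <- r) dot (F i) c.
Proof.
rewrite dotE; under eq_bigr do rewrite summxE mulr_suml.
by rewrite exchange_big /=; apply: eq_bigr => i _; rewrite dotE.
Qed.

Lemma dot_mulr (M : 'M[R]_n) a b : dot a (M *m b) = dot (M^T *m a) b.
Proof. by rewrite /dot trmx_mul trmxK mulmxA. Qed.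

Lemma cV_n0 (v : 'cV[R]_n) : n = 0%N -> v = 0.
Proof.
move=> n0; apply/matrixP => i j; exfalso; have := ltn_ord i; move: (nat_of_ord i); rewrite n0.
by [].
Qed.

Variables (D U : 'M[R]_n) (mu_ : 'I_n -> R) (h : R -> R).
Hypothesis Dsym : D^T = D.
Hypothesis hON : mx_ON_eigenbasis D U mu_.

Lemma hD_eq : mx_fun h U mu_ = U *m diag_mx (\row_k h (mu_ k)) *m U^T.
Proof.
apply/matrixP => i l; rewrite /mx_fun summxE mul_mx_diag !mxE.
apply: eq_bigr => k _; rewrite !mxE big_ord1 !mxE; ring.
Qed.

Lemma hD_sym : (mx_fun h U mu_)^T = mx_fun h U mu_.
Proof. by rewrite hD_eq !trmx_mul trmxK tr_diag_mx mulmxA. Qed.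

Lemma spec (v : 'cV[R]_n) (l : R) : D *m v = l *: v ->
  mx_fun h U mu_ *m v = h l *: v.
Proof.
move: hON => [UU DU] Dv.
have UU' : U *m U^T = 1%:M by apply: mulmx1C.
have UD : U^T *m D = diag_mx (\row_k mu_ k) *m U^T.
  by rewrite -Dsym -trmx_mul DU trmx_mul tr_diag_mx.
set s := U^T *m v.
have sk k : mu_ k * s k 0 = l * s k 0.
  have : (U^T *m (D *m v)) k 0 = (U^T *m (l *: v)) k 0 by rewrite Dv.
  by rewrite mulmxA UD -mulmxA mul_diag_mx -scalemxAr !mxE.
have E : diag_mx (\row_k h (mu_ k)) *m s = h l *: s.
  apply/matrixP => k j; rewrite (ord1 j); have := sk k; rewrite mul_diag_mx !mxE.
  set t := (X in mu_ k * X = _) => skk.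
  have [->//|ne] := eqVneq (mu_ k) l.
  have : (mu_ k - l) * t = 0 by rewrite mulrBl skk subrr.
  move/eqP; rewrite mulf_eq0 subr_eq0 (negPf ne) /= => /eqP t0; rewrite /t in t0; by rewrite t0 !mulr0.
by rewrite hD_eq -!mulmxA -/s E -scalemxAr mulmxA UU' mul1mx.
Qed.
End LA.
Section Count.
Variable R : realType.
Variable n : nat.

Lemma count_le (b : nat -> 'cV[R]_n) (J : nat -> bool) :
  (forall i j, n%:R^-1 * dot (b i) (b j) = ((i == j) && J i)%:R) ->
  (forall j, ~~ J j -> b j = 0) ->
  forall N, (\sum_(j < N) J j <= n)%N.
Proof.
move=> ON bJ N.
have [n0|n0] := eqVneq n 0%N.
  have nR0 : (n%:R : R) = 0 by rewrite n0.
  rewrite big1 // => j _; case Jj: (J j) => //; have := ON j j.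
  by rewrite nR0 invr0 mul0r eqxx Jj /= => /eqP; rewrite eq_sym oner_eq0.
have nR : (n%:R : R) != 0 by rewrite pnatr_eq0.
pose B : 'M[R]_(N, n) := \matrix_(j, i) b j i 0.
have BBt : B *m B^T = \matrix_(j, k) (n%:R * ((j == k :> nat) && J j)%:R).
  apply/matrixP => j k; rewrite !mxE -(ON j k) mulrA mulfV // mul1r dotE.
  by apply: eq_bigr => i _; rewrite !mxE.
have BBtB : B *m B^T *m B = n%:R *: B.
  apply/matrixP => j i; rewrite BBt !mxE (bigD1 j) //= big1 ?addr0.
    rewrite !mxE eqxx /=; case Jj: (J j); first by rewrite mulr1.
    by rewrite bJ ?Jj // !mxE !mulr0.
  move=> k kj; rewrite !mxE; case: eqP => [/val_inj e|_]; last by rewrite !mulr0 mul0r.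
  by rewrite e eqxx in kj.
pose Q := n%:R^-1 *: (B^T *m B).
have QQ : Q *m Q = Q.
  rewrite /Q -scalemxAl -scalemxAr scalerA mulmxA -[B^T *m B *m B^T]mulmxA.
  rewrite -[B^T *m (B *m B^T) *m B]mulmxA BBtB -scalemxAr scalerA.
  by rewrite -mulrA mulVf // mulr1.
have Qt : Q^T = Q by rewrite /Q linearZ /= trmx_mul trmxK.
pose P := 1%:M - Q.
have Pt : P^T = P by rewrite /P linearB /= Qt trmx1.
have PP : P^T *m P = P.
  by rewrite Pt /P mulmxBl mulmxBr !mul1mx mulmxBr mulmx1 QQ subrr subr0.
have trP : 0 <= \tr P.
  rewrite -PP /mxtrace; apply: sumr_ge0 => i _; rewrite mxE.
  by apply: sumr_ge0 => k _; rewrite mxE -expr2 sqr_ge0.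
have trQ : \tr Q = \sum_(j < N) (J j)%:R.
  rewrite /Q mxtraceZ mxtrace_mulC BBt /mxtrace mulr_sumr.
  by apply: eq_bigr => j _; rewrite mxE eqxx /= mulrA mulVf // mul1r.
have trPQ : \tr P = n%:R - \tr Q by rewrite /P linearB /= mxtrace1.
have : \sum_(j < N) ((J j : nat)%:R : R) <= n%:R.
  by rewrite -trQ -subr_ge0 -trPQ.
by rewrite -natr_sum ler_nat.
Qed.
End Count.
Lemma C_mono (J : nat -> bool) N M : (N <= M)%N ->
  (\sum_(j < N) J j <= \sum_(j < M) J j)%N.
Proof.
move=> NM; rewrite -!(big_mkord xpredT (fun j => nat_of_bool (J j))).
by rewrite [X in (_ <= X)%N](@big_cat_nat _ _ _ N) //= leq_addr.
Qed.

Lemma fin_support (J : nat -> bool) (n : nat) :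
  (forall N, (\sum_(j < N) J j <= n)%N) ->
  exists N0, forall j, (N0 <= j)%N -> ~~ J j.
Proof.
move=> H.
case: (pselect (exists N0, forall j, (N0 <= j)%N -> ~~ J j)) => // HN; exfalso.
have H' : forall N0, exists j, (N0 <= j)%N /\ J j.
  move=> N0; apply: contrapT => hh; apply: HN; exists N0 => j Nj.
  by apply/negP => Jj; apply: hh; exists j.
have : forall k, exists N, (k <= \sum_(j < N) J j)%N.
  elim=> [|k [N hN]]; first by exists 0%N.
  have [j [Nj Jj]] := H' N; exists j.+1.
  rewrite big_ord_recr /= Jj addn1 ltnS; apply: leq_trans hN _.
  exact: C_mono.
by move=> /(_ n.+1) [N]; rewrite ltnNge H.
Qed.
Section S6.
Variable R : realType.
Local Notation mu := (@lebesgue_measure R).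
Local Notation I01 := (`[(0:R), 1]%classic).
Local Notation int f := (mu.-integrable I01 (EFin \o f)).
Local Notation mI := (@mI01 R).
Variable n : nat.

Lemma aeF : Filter (almost_everywhere mu).
Proof. exact: ae_filter_ringOfSetsType. Qed.

Lemma coef_ae (f g : R -> R) : measurable_fun I01 f -> measurable_fun I01 g ->
  ae_eq01 f g -> coef n f = coef n g.
Proof.
move=> mf mg fg; apply/matrixP => i j; rewrite !mxE; apply: Rint_ae.
- by apply: measurable_funM => //; exact: mchiP.
- by apply: measurable_funM => //; exact: mchiP.
have hF := aeF.
by apply: filterS fg => x h Ix; rewrite h.
Qed.

Lemma coef0 : coef n (fun _ : R => 0) = 0.
Proof.
apply/matrixP => i j; rewrite !mxE.
under eq_Rintegral do rewrite mulr0.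
by rewrite Rintegral_cst ?mul0r //; exact: mI01.
Qed.

Lemma step_ae0 (a : 'cV[R]_n) : ae_eq01 (stepf a) (fun _ => 0) -> a = 0.
Proof.
move=> h.
have := coef_ae (mstep a) (@measurable_cst _ _ _ _ I01 (0:R)) h.
rewrite coef_step coef0 => e.
have [n0|n0] := eqVneq n 0%N; first exact: cV_n0.
have nR : (n%:R : R) != 0 by rewrite pnatr_eq0.
by rewrite -[a]scale1r -(mulfV nR) -scalerA e scaler0.
Qed.

Lemma ip_sym (f g : R -> R) : ip f g = ip g f.
Proof. by rewrite /ip; apply: eq_Rintegral => x _; rewrite mulrC. Qed.

Lemma stepf_sum (I : Type) (r : seq I) (F : I -> 'cV[R]_n) x :
  stepf (\sum_(i <- r) F i) x = \sum_(i <- r) stepf (F i) x.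
Proof.
rewrite /stepf; under eq_bigr do rewrite summxE mulr_suml.
by rewrite exchange_big.
Qed.

Lemma ae_all (N : nat) (P : nat -> R -> Prop) :
  (forall j, {ae mu, forall x, P j x}) ->
  {ae mu, forall x, forall j, (j < N)%N -> P j x}.
Proof.
have hF := aeF.
move=> H; elim: N => [|N ih].
  by apply: aeW => x j.
apply: filterS2 ih (H N) => x h1 h2 j; rewrite ltnS leq_eqVlt => /orP[/eqP ->//|].
exact: h1.
Qed.
End S6.

Lemma sum_trunc (V : nmodType) (F : nat -> V) N0 N : (N0 <= N)%N ->
  (forall j, (N0 <= j)%N -> F j = 0) ->
  \sum_(j < N) F j = \sum_(j < N0) F j.
Proof.
move=> NN H; rewrite -!(big_mkord xpredT F) (@big_cat_nat _ _ _ N0) //=.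
rewrite [X in _ + X]big_nat_cond [X in _ + X]big1 ?addr0 // => j /andP[/andP[j1 _] _].
exact: H.
Qed.

Lemma cvg_ev0 (R : realType) (f : nat -> R) N0 :
  (forall N, (N0 <= N)%N -> f N = 0) -> f @ \oo --> (0 : R).
Proof.
move=> H; apply: cvg_trans (cvg_cst (0:R)).
apply: near_eq_cvg; exists N0 => // N /= hN.
by rewrite H.
first [exact: _ | exact: eventually_filter | exact: (Proper_Filter _)].
Qed.
Section Main.
Variable R : realType.
Local Notation mu := (@lebesgue_measure R).
Local Notation I01 := (`[(0:R), 1]%classic).
Local Notation int f := (mu.-integrable I01 (EFin \o f)).
Variables (n : nat) (Delta : 'M[R]_n) (h : R -> R) (U : 'M[R]_n)
  (mu_ : 'I_n -> R) (phi : nat -> R -> R) (lam : nat -> R).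
Hypotheses (Dsym : Delta^T = Delta) (h0 : h 0 = 0)
  (hON : mx_ON_eigenbasis Delta U mu_)
  (hB : ON_eigenbasis (graphon_of (n%:R *: Delta)) phi lam).

Let phiL2 j : L2 (phi j). Proof. by case: hB => H _; exact: H. Qed.
Let phiON i j : ip (phi i) (phi j) = (i == j)%:R. Proof. by case: hB => _ [H _]; exact: H. Qed.
Let phiC psi : L2 psi -> (forall j, ip psi (phi j) = 0) -> ae_eq01 psi (fun _ => 0).
Proof. by case: hB => _ [_ [H _]]; exact: H. Qed.
Let phiE j : ae_eq01 (T_op (graphon_of (n%:R *: Delta)) (phi j)) (fun v => lam j * phi j v).
Proof. by case: hB => _ [_ [_ H]]; exact: H. Qed.

Let phiI j : int (phi j). Proof. exact: L2_int. Qed.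
Let phiM j : measurable_fun I01 (phi j). Proof. by case: (phiL2 j). Qed.

Definition cc j : 'cV[R]_n := coef n (phi j).
Definition bb j : 'cV[R]_n :=
  if lam j == 0 then 0 else (lam j)^-1 *: (n%:R *: (Delta *m cc j)).

Lemma T_phi j : T_op (graphon_of (n%:R *: Delta)) (phi j) =
  stepf (n%:R *: (Delta *m cc j)).
Proof. by rewrite T_step // scalemxAl. Qed.

Lemma A1 j : lam j != 0 -> ae_eq01 (phi j) (stepf (bb j)).
Proof.
move=> lj; have hF := aeF R; have := phiE j; rewrite T_phi.
apply: filterS => x hx Ix; rewrite /bb (negPf lj) stepfZ hx //.
by rewrite mulKf.
Qed.

Lemma A2 j : lam j != 0 -> cc j = n%:R^-1 *: bb j.
Proof.
move=> lj; rewrite /cc (coef_ae n (phiM j) (mstep (bb j)) (A1 lj)).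
by rewrite coef_step.
Qed.

Lemma A3 j : lam j = 0 -> Delta *m cc j = 0.
Proof.
move=> lj; have hF := aeF R.
have : ae_eq01 (stepf (n%:R *: (Delta *m cc j))) (fun _ => 0).
  by have := phiE j; rewrite T_phi; apply: filterS => x hx Ix; rewrite hx // lj mul0r.
move/step_ae0 => e.
have [n0|n0] := eqVneq n 0%N; first exact: cV_n0.
have nR : (n%:R : R) != 0 by rewrite pnatr_eq0.
by rewrite -[_ *m _]scale1r -(mulVf nR) -scalerA e scaler0.
Qed.

Lemma bb0 j : lam j = 0 -> bb j = 0.
Proof. by move=> lj; rewrite /bb lj eqxx. Qed.

Lemma A4 i j : n%:R^-1 * dot (bb i) (bb j) = ((i == j) && (lam i != 0))%:R.
Proof.
have [li|li] := eqVneq (lam i) 0.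
  by rewrite bb0 // dot0l mulr0 andbF.
have [lj|lj] := eqVneq (lam j) 0.
  rewrite (bb0 lj) dot0r mulr0; case: eqP => // e.
  by rewrite e lj eqxx in li.
rewrite andbT -phiON /ip.
have hF := aeF R.
rewrite (@Rint_ae _ (fun x => phi i x * phi j x) (fun x => stepf (bb i) x * stepf (bb j) x)).
- rewrite -/(ip (stepf (bb i)) (stepf (bb j))) ip_step ?int_step //.
  by rewrite coef_step dotZr dot_sym.
- by apply: measurable_funM.
- by apply: measurable_funM; exact: mstep.
by apply: filterS2 (A1 li) (A1 lj) => x h1 h2 Ix; rewrite h1 // h2.
Qed.

Lemma A5 j : Delta *m bb j = lam j *: bb j.
Proof.
have [lj|lj] := eqVneq (lam j) 0; first by rewrite bb0 // mulmx0 scaler0.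
have nR : (n%:R : R) != 0.
  apply/eqP => e; have := A4 j j; rewrite e invr0 mul0r eqxx lj /=.
  by move/eqP; rewrite eq_sym oner_eq0.
have E : bb j = (lam j)^-1 *: (Delta *m bb j).
  by rewrite {1}/bb (negPf lj) (A2 lj) -scalemxAr !scalerA -mulrA mulfV // mulr1.
by rewrite {2}E scalerA mulfV // scale1r.
Qed.

Lemma Compl (r : 'cV[R]_n) : (forall j, dot r (cc j) = 0) -> r = 0.
Proof.
move=> H; apply: step_ae0; apply: phiC; first exact: L2_step.
by move=> j; rewrite ip_sym ip_step // H.
Qed.

Lemma Fin : exists N0, forall j, (N0 <= j)%N -> lam j = 0.
Proof.
have H := @count_le R n bb (fun j => lam j != 0) A4.
have H2 : forall N, (\sum_(j < N) (lam j != 0%R) <= n)%N.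
  by move=> N; apply: H => j; rewrite negbK => /eqP; exact: bb0.
have [N0 HN] := @fin_support (fun j => lam j != 0) n H2.
by exists N0 => j /HN; rewrite negbK => /eqP.
Qed.

Lemma Key (c : 'cV[R]_n) N0 : (forall j, (N0 <= j)%N -> lam j = 0) ->
  n%:R *: (mx_fun h U mu_ *m c) =
  \sum_(j < N0) (h (lam j) * dot (bb j) c) *: bb j.
Proof.
move=> HN.
have [n0|n0] := eqVneq n 0%N.
  by rewrite (cV_n0 (_ *: _) n0) (cV_n0 (\sum_(j < N0) _) n0).
have nR : (n%:R : R) != 0 by rewrite pnatr_eq0.
have sp := spec h Dsym hON.
have hbk k : mx_fun h U mu_ *m bb k = h (lam k) *: bb k by apply: sp; exact: A5.
have dbw k : dot (bb k) (mx_fun h U mu_ *m c) = h (lam k) * dot (bb k) c.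
  by rewrite dot_mulr hD_sym hbk dotZl.
have r0 : mx_fun h U mu_ *m c - n%:R^-1 *: \sum_(k < N0) dot (bb k) (mx_fun h U mu_ *m c) *: bb k = 0.
  apply: Compl => j.
  rewrite dotBl dotZl dot_suml.
  have [lj|lj] := eqVneq (lam j) 0.
  - have Dc := A3 lj.
    have hc : mx_fun h U mu_ *m cc j = 0.
      by rewrite (sp _ 0) ?Dc ?scale0r // h0 scale0r.
    rewrite big1; last first.
      move=> k _; rewrite dotZl.
      have [lk|lk] := eqVneq (lam k) 0; first by rewrite bb0 // !dot0l mul0r.
      have E : bb k = (lam k)^-1 *: (Delta *m bb k).
        by rewrite A5 scalerA mulVf // scale1r.
      by rewrite [in X in _ * X]E dotZl [X in _ * (_ * X)]dot_sym [X in _ * (_ * X)]dot_mulr Dsym Dc dot0l !mulr0.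
    by rewrite dot_sym dot_mulr hD_sym hc dot0l mulr0 subr0.
  - have jN : (j < N0)%N by rewrite ltnNge; apply/negP => /HN; apply/eqP.
    rewrite (bigD1 (Ordinal jN)) //= big1 ?addr0; last first.
      move=> k kj; rewrite (A2 lj) dotZl dotZr A4; case: eqP => [e|_] /=; last by rewrite mulr0.
      by exfalso; apply: (negP kj); apply/eqP/val_inj.
    rewrite (A2 lj) dotZl !dotZr A4 eqxx lj /= mulr1 (dot_sym (bb j)).
    by rewrite subrr.
have -> : mx_fun h U mu_ *m c =
    n%:R^-1 *: \sum_(k < N0) dot (bb k) (mx_fun h U mu_ *m c) *: bb k.
  by apply/eqP; rewrite -subr_eq0 r0.
rewrite scalerA mulfV // scale1r; apply: eq_bigr => k _.
by rewrite dbw.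
Qed.

End Main.
Theorem proposition4p4 (R : realType) (n : nat) (Delta : 'M[R]_n)
  (h : R -> R) (U : 'M[R]_n) (mu_ : 'I_n -> R)
  (phi : nat -> R -> R) (lam : nat -> R) :
  Delta^T = Delta ->
  continuous h ->
  h 0 = 0 ->
  mx_ON_eigenbasis Delta U mu_ ->
  ON_eigenbasis (graphon_of (n%:R *: Delta)) phi lam ->
  forall psi : R -> R, L2 psi ->
    (fun N => l2dist2 (fc_partial h phi lam psi N)
                      (T_op (graphon_of (n%:R *: mx_fun h U mu_)) psi))
      @ \oo --> (0 : R).
Proof.
move=> Dsym _ h0 hON hB psi Lpsi.
have [N0 HN] := Fin hB.
apply: (@cvg_ev0 _ _ N0) => N NN.
have ipsi := L2_int Lpsi.
have mpsi : measurable_fun `[(0:R), 1]%classic psi by case: Lpsi.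
have phiM j : measurable_fun `[(0:R), 1]%classic (phi j) by case: hB => H _; case: (H j).
have hF := aeF R.
set c := coef n psi.
pose b := bb Delta phi lam.
pose V' := \sum_(j < N) (h (lam j) * ip psi (phi j)) *: b j.
have VV : V' = \sum_(j < N0) (h (lam j) * dot (b j) c) *: b j.
  rewrite /V' (@sum_trunc _ (fun j => (h (lam j) * ip psi (phi j)) *: b j) N0 N NN); last first.
    by move=> j /HN lj; rewrite /b bb0 // scaler0.
  apply: eq_bigr => j _.
  have [lj|lj] := eqVneq (lam j) 0; first by rewrite /b bb0 // !scaler0.
  congr (_ * _ *: _).
  rewrite /ip (@Rint_ae _ _ (fun x => psi x * stepf (b j) x)).
  - by rewrite -/(ip psi (stepf (b j))) ip_step.
  - exact: measurable_funM.
  - by apply: measurable_funM => //; exact: mstep.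
  by apply: filterS (A1 hB lj) => x hx Ix; rewrite hx.
have fcae : ae_eq01 (fc_partial h phi lam psi N) (stepf V').
  have aeJ : {ae @lebesgue_measure R, forall x, forall j, (j < N)%N ->
     (`[(0:R), 1]%classic x -> h (lam j) * phi j x = h (lam j) * stepf (b j) x)}.
    apply: (@ae_all R N (fun j x => `[(0:R), 1]%classic x ->
      h (lam j) * phi j x = h (lam j) * stepf (b j) x)) => j.
    have [lj|lj] := eqVneq (lam j) 0.
      by apply: aeW => x Ix; rewrite lj h0 !mul0r.
    by apply: filterS (A1 hB lj) => x hx Ix; rewrite hx.
  apply: filterS aeJ => x Hx Ix.
  rewrite /fc_partial /V' stepf_sum; apply: eq_bigr => j _.
  by rewrite stepfZ mulrAC [RHS]mulrAC (Hx j (ltn_ord j) Ix).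
rewrite /l2dist2 (T_step _ ipsi) -scalemxAl (Key Dsym h0 hON hB c HN) -VV.
rewrite (@Rint_ae _ _ (fun _ => 0)).
- by rewrite Rintegral_cst ?mul0r //; exact: mI01.
- apply: measurable_funX; apply: measurable_funB; last exact: mstep.
  by rewrite /fc_partial; apply: measurable_sum => j; apply: measurable_funM.
- exact: (@measurable_cst _ _ _ _ _ (0:R)).
by apply: filterS fcae => x hx Ix; rewrite hx // subrr expr2 mulr0.
Qed.
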